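(* Let $r\ge0$, let $\mathbf u=(u_1,\dots,u_r)$ be a tuple of positive integers, and let $\mathbf w=(w_1,\dots,w_n)$ and $\boldsymbol\ell=(\ell_1,\dots,\ell_n)$ be tuples of positive integers with $2\le\ell_i\le w_i$ for all $i$. Define an equivalence relation $\sim$ on $\{1,\dots,n\}$ by $i\sim j$ if and only if $w_i=w_j$ and $\ell_i=\ell_j$, and let $R$ be a set of equivalence class representatives. Then \[ C(\mathrm{cat}(\mathbf u,\mathbf w),\mathrm{cat}(1^r,\boldsymbol\ell),2)=C(\mathrm{cat}(\mathbf u,\mathbf w^R),\mathrm{cat}(1^r,\boldsymbol\ell^R),2). \]
   Context: $1^r$ denotes the $r$-tuple with all entries $1$; $\mathrm{cat}(\mathbf a,\mathbf b)$ is the concatenation of tuples; for $R\subseteq\{1,\dots,n\}$, $\mathbf w^R$ denotes the tuple of entries of $\mathbf w$ in positions from $R$ (in increasing order). For tuples $\mathbf v,\mathbf k$ of positive integers of the same length $p$ with $\mathbf k\le\mathbf v$ entrywise: let $X_1,\dots,X_p$ be pairwise disjoint sets with $|X_i|=v_i$; a block is a $p$-tuple $(B_1,\dots,B_p)$ with $B_i\subseteq X_i$, $|B_i|=k_i$; a $p$-tuple of sets $(T_1,\dots,T_p)$ is $(\mathbf v,\mathbf k,2)$-admissible if $T_i\subseteq X_i$, $|T_i|\le k_i$ and $\sum|T_i|=2$, and is contained in a block if $T_i\subseteq B_i$ for all $i$. A ${\rm GC}(\mathbf v,\mathbf k,2)$ is a finite family (repetitions allowed) of blocks containing every admissible tuple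 in at least one block; $C(\mathbf v,\mathbf k,2)$ is the minimum number of blocks of such a design. *)

(* Defs.v *)
From mathcomp Require Import all_boot all_order.
From Stdlib Require Import ClassicalDescription.
Set Implicit Arguments. Unset Strict Implicit. Unset Printing Implicit Defensive.

(* The p = size v groups X_1..X_p are realized as subsets of a common ground
   type 'I_(Vb v) (Vb v >= every v_i); they are kept disjoint by indexing:
   a block / admissible tuple is a p-tuple (finite function on 'I_p) of sets,
   component i living in X v i = {0,...,v_i - 1}. *)

Definition Vb (v : seq nat) : nat := \max_(i < size v) nth 0 v i.

Definition X (v : seq nat) (i : 'I_(size v)) : {set 'I_(Vb v)} :=
  [set x : 'I_(Vb v) | x < nth 0 v i].

Arguments X v i : clear implicits.

Definition setTuple (v : seq nat) := {ffun 'I_(size v) -> {set 'I_(Vb v)}}.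

Definition is_block (v k : seq nat) (B : setTuple v) : bool :=
  [forall i, (B i \subset X v i) && (#|B i| == nth 0 k i)].

Definition admissible (v k : seq nat) (T : setTuple v) : bool :=
  [forall i, (T i \subset X v i) && (#|T i| <= nth 0 k i)]
  && (\sum_(i < size v) #|T i| == 2).

Arguments is_block v k B : clear implicits.
Arguments admissible v k T : clear implicits.

Definition contained_in (v : seq nat) (T B : setTuple v) : bool :=
  [forall i, T i \subset B i].

Definition is_GC (v k : seq nat) (D : seq (setTuple v)) : bool :=
  all (is_block v k) D &&
  [forall T : setTuple v, admissible v k T ==> has (contained_in T) D].

Arguments is_GC v k D : clear implicits.

Definition has_GC_of_size (v k : seq nat) (n : nat) : bool :=
  [exists D : n.-tuple (setTuple v), is_GC v k D].

(* C(v,k,2): minimum number of blocks of a GC(v,k,2)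
   (0 by convention if no GC exists, which cannot happen when k <= v). *)
Definition C (v k : seq nat) : nat :=
  match excluded_middle_informative (exists n, has_GC_of_size v k n) with
  | left H => ex_minn H
  | right _ => 0
  end.

Definition subtuple (n : nat) (w : seq nat) (R : {set 'I_n}) : seq nat :=
  [seq nth 0 w (val i) | i <- enum R].

(* Main.v *)
Require Import Defs.
From mathcomp Require Import all_boot all_order.
From mathcomp Require Import zify.
From Stdlib Require Import ClassicalDescription.
Set Implicit Arguments. Unset Strict Implicit. Unset Printing Implicit Defensive.

Lemma sum_pos_ex (I : finType) (P : pred I) (F : I -> nat) :
  0 < \sum_(i | P i) F i -> exists2 i, P i & 0 < F i.
Proof.
case: (pickP [pred i | P i && (0 < F i)]) => [i /andP[Pi Fi]|H]; first by exists i.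
rewrite big1 // => i Pi; move: (H i) => /=; rewrite Pi /=; by case: (F i).
Qed.

Lemma sum_eq0_all (I : finType) (P : pred I) (F : I -> nat) :
  \sum_(i | P i) F i = 0 -> forall i, P i -> F i = 0.
Proof.
move/eqP; rewrite sum_nat_eq0 => /forallP H i Pi.
by move: (H i); rewrite Pi => /eqP.
Qed.

Lemma sum2 p (F : 'I_p -> nat) : \sum_i F i = 2 ->
 (exists i, F i = 2 /\ forall j, j != i -> F j = 0) \/
 (exists i1 i2, [/\ i1 != i2, F i1 = 1, F i2 = 1 & forall j, j != i1 -> j != i2 -> F j = 0]).
Proof.
move=> H.
have [i _ Fi] : exists2 i, true & 0 < F i by apply: sum_pos_ex; rewrite H.
move: H; rewrite (bigD1 i) //= => H.
have [F2|F1] : F i = 2 \/ F i = 1 by lia.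
  left; exists i; split => // j ji.
  apply: (@sum_eq0_all _ (fun j => j != i)) => //. by move: H; rewrite F2 -[X in _ = X]addn0 => /addnI.
right.
have [j ji Fj] : exists2 j, j != i & 0 < F j.
  apply: (@sum_pos_ex _ (fun j => j != i)). by move: H; rewrite F1 add1n => [[->]].
move: H; rewrite (bigD1 j) //= => H.
have Fj1 : F j = 1 by lia.
exists i, j; split => //; first by rewrite eq_sym.
move=> t ti tj.
apply: (@sum_eq0_all _ (fun t => (t != i) && (t != j))).
  by move: H; rewrite F1 Fj1 !add1n => [[]].
by rewrite ti tj.
Qed.

Definition pairs1 v k (D : seq (setTuple v)) :=
  forall i (x y : 'I_(Vb v)), x \in X v i -> y \in X v i -> x != y ->
    2 <= nth 0 k i -> exists2 B, B \in D & (x \in B i) && (y \in B i).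
Definition pairs2 v k (D : seq (setTuple v)) :=
  forall i j (x y : 'I_(Vb v)), i != j -> x \in X v i -> y \in X v j ->
    0 < nth 0 k i -> 0 < nth 0 k j -> exists2 B, B \in D & (x \in B i) && (y \in B j).

Lemma GC_pairs1 v k D : is_GC v k D -> pairs1 k D.
Proof.
move=> /andP[_ /forallP H] i x y xi yi xy k2.
pose T : setTuple v := [ffun t => if t == i then [set x; y] else set0].
have /hasP [B BD /forallP cB] : has (contained_in T) D.
  apply: (implyP (H T)); apply/andP; split.
    apply/forallP => t; rewrite /T ffunE; case: eqP => [->|_].
      by rewrite subUset !sub1set xi yi cards2 xy.
    by rewrite sub0set cards0.
  apply/eqP; rewrite (bigD1 i) //= big1 => [|t ti].
    by rewrite /T ffunE eqxx cards2 xy.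
  by rewrite /T ffunE (negbTE ti) cards0.
exists B => //; move: (cB i); rewrite /T ffunE eqxx subUset !sub1set.
by move=> /andP[-> ->].
Qed.

Lemma GC_pairs2 v k D : is_GC v k D -> pairs2 k D.
Proof.
move=> /andP[_ /forallP H] i j x y ij xi yj ki kj.
pose T : setTuple v := [ffun t => if t == i then [set x] else if t == j then [set y] else set0].
have /hasP [B BD /forallP cB] : has (contained_in T) D.
  apply: (implyP (H T)); apply/andP; split.
    apply/forallP => t; rewrite /T ffunE; case: eqP => [->|_].
      by rewrite sub1set xi cards1.
    case: eqP => [->|_]; first by rewrite sub1set yj cards1.
    by rewrite sub0set cards0.
  apply/eqP; rewrite (bigD1 i) //= (bigD1 j) 1?eq_sym //= big1 => [|t /andP[ti tj]].
    have ji : j != i by rewrite eq_sym.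
    by rewrite /T !ffunE eqxx (negbTE ji) eqxx !cards1.
  by rewrite /T ffunE (negbTE ti) (negbTE tj) cards0.
exists B => //; move: (cB i) (cB j); rewrite /T !ffunE eqxx.
rewrite eq_sym (negbTE ij) eqxx !sub1set.
by move=> -> ->.
Qed.

Lemma pairs_GC v k D : all (is_block v k) D -> pairs1 k D -> pairs2 k D -> is_GC v k D.
Proof.
move=> Hb P1 P2; apply/andP; split=> //.
apply/forallP => T; apply/implyP => /andP[/forallP HT /eqP Hs].
case: (sum2 Hs) => [[i [Ti Tj]] | [i1 [i2 [ne T1 T2 Tj]]]].
  move: (HT i) => /andP[sub ki].
  move/eqP: Ti => /cards2P [x [y [xy Tie]]].
  rewrite Tie in sub ki.
  have [B BD /andP[xB yB]] : exists2 B, B \in D & (x \in B i) && (y \in B i).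
    apply: (P1 i x y) => //.
    - by rewrite (subsetP sub) // !inE eqxx.
    - by rewrite (subsetP sub) // !inE eqxx orbT.
    - by move: ki; rewrite cards2 xy.
  apply/hasP; exists B => //; apply/forallP => t; case: (eqVneq t i) => [->|ti].
    by rewrite Tie subUset !sub1set xB yB.
  by rewrite (cards0_eq (Tj t ti)) sub0set.
move: (HT i1) (HT i2) => /andP[sub1 k1] /andP[sub2 k2].
move/eqP: T1 => /cards1P [x T1e]. move/eqP: T2 => /cards1P [y T2e].
rewrite T1e in sub1 k1; rewrite T2e in sub2 k2.
have [B BD /andP[xB yB]] : exists2 B, B \in D & (x \in B i1) && (y \in B i2).
  apply: (P2 i1 i2 x y) => //.
  - by rewrite -sub1set.
  - by rewrite -sub1set.
  - by move: k1; rewrite cards1.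
  - by move: k2; rewrite cards1.
apply/hasP; exists B => //; apply/forallP => t.
case: (eqVneq t i1) => [->|ti1]; first by rewrite T1e sub1set.
case: (eqVneq t i2) => [->|ti2]; first by rewrite T2e sub1set.
by rewrite (cards0_eq (Tj t ti1 ti2)) sub0set.
Qed.

Definition conv a b (S : {set 'I_a}) : {set 'I_b} :=
  [set y : 'I_b | [exists x in S, val x == val y]].

Lemma card_conv a b (S : {set 'I_a}) :
  (forall x, x \in S -> val x < b) -> #|conv b S| = #|S|.
Proof.
case: b => [|b] H.
  have -> : #|S| = 0.
    apply/eqP; rewrite cards_eq0; apply/eqP/setP => x; rewrite inE.
    by apply/negbTE/negP => /H.
  by apply/eqP; rewrite cards_eq0; apply/eqP/setP; case.
have -> : conv b.+1 S = [set inord (val x) | x in S].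
  apply/setP => y; rewrite inE; apply/existsP/imsetP.
    move=> [x /andP[xS /eqP xy]]; exists x => //.
    apply: ord_inj; rewrite inordK; [exact: (esym xy) | exact: H].
  move=> [x xS ->]; exists x; rewrite xS /= inordK //.
  exact: H.
rewrite card_in_imset // => x1 x2 S1 S2 /(congr1 val).
by rewrite /= !inordK ?H //; apply: val_inj.
Qed.

Lemma transfer v k v' k' (g : nat -> nat) m :
 (forall i, i < size v -> g i < size v') ->
 (forall i, i < size v -> nth 0 v i = nth 0 v' (g i)) ->
 (forall i, i < size v -> nth 0 k i = nth 0 k' (g i)) ->
 (forall i1 i2, i1 < size v -> i2 < size v -> i1 != i2 -> g i1 = g i2 ->
     2 <= nth 0 k i1 <= nth 0 v i1) ->
 has_GC_of_size v' k' m -> has_GC_of_size v k m.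
Proof.
move=> Hg Hv Hk Hc /existsP [D' HD'].
pose go (i : 'I_(size v)) : 'I_(size v') := Ordinal (Hg i (ltn_ord i)).
pose pull (B' : setTuple v') : setTuple v := [ffun i => conv (Vb v) (B' (go i))].
apply/existsP; exists [tuple of map pull D'].
move: (HD') => /andP[/allP Hb' _].
have P1' := GC_pairs1 HD'; have P2' := GC_pairs2 HD'.
have Hv' (i : 'I_(size v)) : nth 0 v i = nth 0 v' (go i) by exact: Hv.
have Hk' (i : 'I_(size v)) : nth 0 k i = nth 0 k' (go i) by exact: Hk.
have lift (x : 'I_(Vb v)) i : x \in X v i ->
    exists2 x' : 'I_(Vb v'), val x' = val x & x' \in X v' (go i).
  rewrite inE Hv' => xi.
  have xb : val x < Vb v' by apply: leq_trans xi (leq_bigmax (go i)).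
  by exists (Ordinal xb); rewrite // inE.
have pull_in (B' : setTuple v') i (x : 'I_(Vb v)) (x' : 'I_(Vb v')) :
    x' \in B' (go i) -> val x' = val x -> x \in pull B' i.
  move=> xB e; rewrite ffunE inE; apply/existsP; exists x'.
  by rewrite xB e eqxx.
have k2' (i : 'I_(size v)) : 2 <= nth 0 k i -> 2 <= nth 0 k' (go i) by rewrite Hk'.
have k1' (i : 'I_(size v)) : 0 < nth 0 k i -> 0 < nth 0 k' (go i) by rewrite Hk'.
apply: pairs_GC.
- apply/allP => B /mapP [B' B'D ->]; move: (Hb' B' B'D) => /forallP Hb.
  apply/forallP => i; rewrite ffunE; move: (Hb (go i)) => /andP[sub /eqP card].
  apply/andP; split.
    apply/subsetP => y; rewrite inE => /existsP [x /andP[xB /eqP xy]].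
    by rewrite inE -xy Hv'; move: (subsetP sub x xB); rewrite inE.
  rewrite card_conv ?card ?Hk' // => x xB.
  move: (subsetP sub x xB); rewrite inE -Hv' => xi.
  exact: leq_trans xi (leq_bigmax i).
- move=> i x y xi yi xy k2.
  have [x' vx xX] := lift x i xi; have [y' vy yX] := lift y i yi.
  have xy' : x' != y'.
    by apply: contra xy => /eqP e; apply/eqP/val_inj; rewrite -vx -vy e.
  have [B' B'D /andP[xB yB]] := P1' (go i) x' y' xX yX xy' (k2' i k2).
  exists (pull B'); first exact: map_f.
  by rewrite (pull_in _ _ _ _ xB vx) (pull_in _ _ _ _ yB vy).
- move=> i j x y ij xi yj ki kj.
  have [x' vx xX] := lift x i xi; have [y' vy yX] := lift y j yj.
  case: (eqVneq (go i) (go j)) => gij.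
    have ij' : val i != val j by apply: contra ij => /eqP/val_inj ->.
    have /andP[k2 kv] := Hc i j (ltn_ord i) (ltn_ord j) ij' (congr1 val gij).
    rewrite -gij in yX.
    case: (eqVneq x' y') => [exy | nxy].
      have zb : (val x' == 0 : nat) < nth 0 v' (go i).
        rewrite -Hv'; apply: leq_trans kv; apply: leq_trans k2.
        by case: (_ == 0).
      have zb' : (val x' == 0 : nat) < Vb v'.
        by apply: leq_trans zb (leq_bigmax (go i)).
      pose z : 'I_(Vb v') := Ordinal zb'.
      have zX : z \in X v' (go i) by rewrite inE.
      have xz : x' != z.
        apply/eqP => /(congr1 val) /=; by case: (val x').
      have [B' B'D /andP[xB _]] :=
        P1' (go i) x' z xX zX xz (k2' i k2).
      exists (pull B'); first exact: map_f.
      rewrite (pull_in _ _ _ _ xB vx) /=.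
      apply: (pull_in _ _ _ x'); first by rewrite -gij.
      by rewrite exy.
    have [B' B'D /andP[xB yB]] :=
      P1' (go i) x' y' xX yX nxy (k2' i k2).
    exists (pull B'); first exact: map_f.
    rewrite (pull_in _ _ _ _ xB vx) /=.
    by apply: (pull_in _ _ _ y'); first by rewrite -gij.
  have [B' B'D /andP[xB yB]] :=
    P2' (go i) (go j) x' y' gij xX yX (k1' i ki) (k1' j kj).
  exists (pull B'); first exact: map_f.
  by rewrite (pull_in _ _ _ _ xB vx) (pull_in _ _ _ _ yB vy).
Qed.

Lemma C_ext v k v' k' :
  (forall m, has_GC_of_size v k m = has_GC_of_size v' k' m) -> C v k = C v' k'.
Proof.
move=> H; rewrite /C.
case: excluded_middle_informative => H1; case: excluded_middle_informative => H2.
- exact: eq_ex_minn.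
- by exfalso; apply: H2; case: H1 => m; rewrite H => ?; exists m.
- by exfalso; apply: H1; case: H2 => m; rewrite -H => ?; exists m.
- by [].
Qed.

Lemma nthL (a b : seq nat) r i : size a = r ->
  nth 0 (a ++ b) i = if i < r then nth 0 a i else nth 0 b (i - r).
Proof. by move=> Ha; rewrite nth_cat Ha. Qed.

Lemma nthR (a b : seq nat) r x : size a = r -> nth 0 (a ++ b) (r + x) = nth 0 b x.
Proof. by move=> Ha; rewrite nth_cat Ha ltnNge leq_addr /= addKn. Qed.

Theorem theorem3p13 (r n : nat) (u w l : seq nat) (R : {set 'I_n}) :
  size u = r ->
  (forall i, i < r -> 0 < nth 0 u i) ->
  size w = n -> size l = n ->
  (forall i, i < n -> 2 <= nth 0 l i <= nth 0 w i) ->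
  (* R is a set of representatives of i ~ j :<-> w_i = w_j /\ l_i = l_j *)
  (forall i : 'I_n, exists2 j, j \in R &
       (nth 0 w i = nth 0 w j) /\ (nth 0 l i = nth 0 l j)) ->
  (forall j j' : 'I_n, j \in R -> j' \in R ->
       (nth 0 w j = nth 0 w j') /\ (nth 0 l j = nth 0 l j') -> j = j') ->
  C (u ++ w) (nseq r 1 ++ l) = C (u ++ subtuple w R) (nseq r 1 ++ subtuple l R).
Proof.
move=> Hu _ Hw Hl Hlw Hrep _.
pose s := map val (enum R).
have subE (z : seq nat) : subtuple z R = map (fun a => nth 0 z a) s.
  by rewrite /subtuple /s -map_comp.
rewrite !subE.
have s_lt t : t < size s -> nth 0 s t < n.
  move=> ts; have := mem_nth 0 ts; rewrite /s => /mapP [j _ ->]; exact: ltn_ord.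
have s_uniq : uniq s by rewrite /s map_inj_uniq ?enum_uniq //; exact: val_inj.
have Hn1 : size (nseq r 1) = r by rewrite size_nseq.
have nth1 i : i < r -> nth 0 (nseq r 1) i = 1 by move=> ir; rewrite nth_nseq ir.
have nthS (z : seq nat) t : t < size s -> nth 0 (map (fun a => nth 0 z a) s) t = nth 0 z (nth 0 s t).
  by move=> ts; rewrite (nth_map 0).
pose P t := fun a => (nth 0 w a == nth 0 w t) && (nth 0 l a == nth 0 l t).
have hasP' t : t < n -> has (P t) s.
  move=> tn; have [j jR [e1 e2]] := Hrep (Ordinal tn).
  apply/hasP; exists (val j); first by rewrite /s map_f // mem_enum.
  by rewrite /P /= e1 e2 !eqxx.
have sz (z : seq nat) : size (map (fun a => nth 0 z a) s) = size s by rewrite size_map.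
pose g1 i := if i < r then i else r + find (P (i - r)) s.
pose g2 j := if j < r then j else r + nth 0 s (j - r).
apply: C_ext => m; apply/idP/idP.
- apply: (@transfer _ _ _ _ g2); rewrite ?size_cat ?Hu ?Hw ?sz.
  + move=> i ir; rewrite /g2; case: ifP => jr; first lia.
    have h : i - r < size s by lia.
    have := s_lt _ h; lia.
  + move=> i ir; rewrite /g2; case: ifP => jr; first by rewrite !(@nthL _ _ _ _ Hu) jr.
    rewrite (@nthR _ _ _ _ Hu) (@nthL _ _ _ _ Hu) jr nthS //; lia.
  + move=> i ir; rewrite /g2; case: ifP => jr; first by rewrite !(@nthL _ _ _ _ Hn1) jr.
    rewrite (@nthR _ _ _ _ Hn1) (@nthL _ _ _ _ Hn1) jr nthS //; lia.
  + move=> i1 i2 h1 h2 ne; rewrite /g2; case: (ltnP i1 r) => r1; case: (ltnP i2 r) => r2 => e; try lia.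
    have e' : nth 0 s (i1 - r) == nth 0 s (i2 - r) by apply/eqP; lia.
    rewrite nth_uniq in e'; last exact s_uniq.
    exfalso; move/eqP: e'; move/eqP: ne; lia.
      by rewrite ltn_subLR. by rewrite ltn_subLR.
- apply: (@transfer _ _ _ _ g1); rewrite ?size_cat ?Hu ?Hw ?sz.
  + move=> i ir; rewrite /g1; case: ifP => jr; first lia.
    have h : i - r < n by lia.
    have := hasP' _ h; rewrite has_find; lia.
  + move=> i ir; rewrite /g1; case: ifP => jr; first by rewrite !(@nthL _ _ _ _ Hu) jr.
    have h : i - r < n by lia.
    have hf : find (P (i - r)) s < size s by rewrite -has_find; exact: hasP'.
    rewrite (@nthR _ _ _ _ Hu) (@nthL _ _ _ _ Hu) jr nthS //.
    by have := nth_find 0 (hasP' _ h); rewrite /P => /andP[/eqP -> _].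
  + move=> i ir; rewrite /g1; case: ifP => jr; first by rewrite !(@nthL _ _ _ _ Hn1) jr.
    have h : i - r < n by lia.
    have hf : find (P (i - r)) s < size s by rewrite -has_find; exact: hasP'.
    rewrite (@nthR _ _ _ _ Hn1) (@nthL _ _ _ _ Hn1) jr nthS //.
    by have := nth_find 0 (hasP' _ h); rewrite /P => /andP[_ /eqP ->].
  + move=> i1 i2 h1 h2 ne e.
    case: (ltnP i1 r) => r1.
      by exfalso; move: e; rewrite /g1 r1; case: ifP => r2; lia.
    have r1' : (i1 < r) = false by rewrite ltnNge r1.
    rewrite (@nthL _ _ _ _ Hn1) (@nthL _ _ _ _ Hu) r1'; apply: Hlw; lia.
Qed.
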